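(* For every $l\in\mathbb Z/n\mathbb Z$, the generating series satisfy $b'_l(u)=b_l(u+d_l)$ in $\mathcal Y_{\underline d}[[u^{-1}]]$, where $b_l(u+d_l)=\sum_{s\ge0}b_{l,s}(u+d_l)^{-s-1}$ is expanded in powers of $u^{-1}$.
   Context: Fix $n\ge1$, nonnegative integers $\underline d=(d_l)_{l\in\mathbb Z/n\mathbb Z}$. Let $\mathfrak a_{\underline d}$ be the Lie algebra with basis $e_{l,ij},e'_{l,ij}$ ($1\le i,j\le d_l$), $q_{l,i},p_{l,i}$ ($1\le i\le d_l$), $f_{l,ij}$ ($1\le i\le d_{l+1}$, $1\le j\le d_l$), $l\in\mathbb Z/n\mathbb Z$, with brackets $[e_{l,ij},e_{l,km}]=\delta_{jk}e_{l,im}-\delta_{im}e_{l,kj}$ and likewise for $e'$; $[e_{l,ij},q_{l,k}]=\delta_{jk}q_{l,i}$; $[e'_{l,ij},p_{l,k}]=-\delta_{ki}p_{l,j}$; $[q_{l,j},p_{l+1,i}]=f_{l,ij}$; $[e_{l,ij},f_{l,mk}]=\delta_{jk}f_{l,mi}$; $[e'_{l+1,ij},f_{l,mk}]=-\delta_{mi}f_{l,jk}$; all other brackets zero. Let $R\subset U(\mathfrak a_{\underline d})$ be spanned by $\sum_{m=1}^{d_l}e_{l,mj}f_{l,im}+\sum_{m=1}^{d_{l+1}}f_{l,mj}e'_{l+1,im}+\tfrac12(p_{l+1,i}q_{l,j}+q_{l,j}p_{l+1,i})$, and $\mathfrak{gl}(V_{\underline d})_{\rm diag}$ be spanned by $e_{l,ij}+e'_{l,ij}$;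 $\mathcal Y_{\underline d}:=\big(U(\mathfrak a_{\underline d})/U(\mathfrak a_{\underline d})(R+\mathfrak{gl}(V_{\underline d})_{\rm diag})\big)^{\mathfrak{gl}(V_{\underline d})_{\rm diag}}$. Let $b_{l,s}$ be the image of $\sum p_{l,i_1}e_{l,i_1i_2}\cdots e_{l,i_si_{s+1}}q_{l,i_{s+1}}$, $b'_{l,s}$ the image of $(-1)^s\sum p_{l,i_1}e'_{l,i_1i_2}\cdots e'_{l,i_si_{s+1}}q_{l,i_{s+1}}$ ($s\ge0$), and $b_l(u)=\sum_{s\ge0}b_{l,s}u^{-s-1}$, $b'_l(u)=\sum_{s\ge0}b'_{l,s}u^{-s-1}$. *)

(* Defs.v *)
From HB Require Import structures.
From mathcomp Require Import all_boot all_order all_algebra.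
Set Implicit Arguments. Unset Strict Implicit. Unset Printing Implicit Defensive.
Import Order.TTheory GRing.Theory Num.Theory.
Local Open Scope ring_scope.

(* Basis of the Lie algebra a_d.  Indices i, j are 0-based naturals; the   *)
(* component index l lives in 'I_n (= Z/nZ, with successor ordS).         *)
Inductive gen (n : nat) : Type :=
| GE  of 'I_n & nat & nat
| GE' of 'I_n & nat & nat
| GQ  of 'I_n & nat
| GP  of 'I_n & nat
| GF  of 'I_n & nat & nat.    (* f_{l,ij}, i < d_{l+1}, j < d_l *)

Definition valid_gen (n : nat) (d : 'I_n -> nat) (g : gen n) : bool :=
  match g with
  | GE l i j => (i < d l)%N && (j < d l)%N
  | GE' l i j => (i < d l)%N && (j < d l)%N
  | GQ l i => (i < d l)%N
  | GP l i => (i < d l)%N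
  | GF l i j => (i < d (ordS l))%N && (j < d l)%N
  end.

(* Syntactic expressions of the free associative K-algebra on gen n. *)
Inductive expr (K : Type) (G : Type) : Type :=
| EX  of G
| EC  of K
| EAdd of expr K G & expr K G
| EMul of expr K G & expr K G.

Arguments EX {K G}. Arguments EC {K G}. Arguments EAdd {K G}. Arguments EMul {K G}.

Section Exprs.
Variables (K : fieldType) (G : Type).
Notation ex := (expr K G).

Definition eneg (x : ex) : ex := EMul (EC (-1)) x.
Definition esub (x y : ex) : ex := EAdd x (eneg y).
Definition esum (m : nat) (f : nat -> ex) : ex :=
  foldr (fun i acc => EAdd (f i) acc) (EC 0) (iota 0 m).

(* The congruence on expressions generated by the axioms of an associative *)
(* unital K-algebra together with extra relations [rel]: [aeq rel x y] iff  *)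
(* x and y are equal in the free K-algebra on G modulo the two-sided ideal  *)
(* generated by the differences x - y with rel x y.                        *)
Inductive aeq (rel : ex -> ex -> Prop) : ex -> ex -> Prop :=
| aeq_refl x : aeq rel x x
| aeq_sym x y : aeq rel x y -> aeq rel y x
| aeq_trans x y z : aeq rel x y -> aeq rel y z -> aeq rel x z
| aeq_add x x' y y' : aeq rel x x' -> aeq rel y y' -> aeq rel (EAdd x y) (EAdd x' y')
| aeq_mul x x' y y' : aeq rel x x' -> aeq rel y y' -> aeq rel (EMul x y) (EMul x' y')
| aeq_addA x y z : aeq rel (EAdd x (EAdd y z)) (EAdd (EAdd x y) z)
| aeq_addC x y : aeq rel (EAdd x y) (EAdd y x)
| aeq_add0 x : aeq rel (EAdd (EC 0) x) x
| aeq_addN x : aeq rel (EAdd x (eneg x)) (EC 0)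
| aeq_mulA x y z : aeq rel (EMul x (EMul y z)) (EMul (EMul x y) z)
| aeq_mul1l x : aeq rel (EMul (EC 1) x) x
| aeq_mul1r x : aeq rel (EMul x (EC 1)) x
| aeq_mulDl x y z : aeq rel (EMul (EAdd x y) z) (EAdd (EMul x z) (EMul y z))
| aeq_mulDr x y z : aeq rel (EMul x (EAdd y z)) (EAdd (EMul x y) (EMul x z))
| aeq_cadd a b : aeq rel (EAdd (EC a) (EC b)) (EC (a + b))
| aeq_cmul a b : aeq rel (EMul (EC a) (EC b)) (EC (a * b))
| aeq_ccomm a x : aeq rel (EMul (EC a) x) (EMul x (EC a))
| aeq_rel x y : rel x y -> aeq rel x y.

(* Equality in the left module A / A.S, where A = free algebra / (aeq rel) *)
(* and A.S is the left ideal generated by the elements s with S s.          *)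
Inductive meq (rel : ex -> ex -> Prop) (S : ex -> Prop) : ex -> ex -> Prop :=
| meq_aeq x y : aeq rel x y -> meq rel S x y
| meq_sym x y : meq rel S x y -> meq rel S y x
| meq_trans x y z : meq rel S x y -> meq rel S y z -> meq rel S x z
| meq_add x x' y y' : meq rel S x x' -> meq rel S y y' -> meq rel S (EAdd x y) (EAdd x' y')
| meq_lmul z x y : meq rel S x y -> meq rel S (EMul z x) (EMul z y)
| meq_gen s : S s -> meq rel S s (EC 0).
End Exprs.

Section Ad.
Variables (K : fieldType) (n : nat) (d : 'I_n -> nat).
Notation ex := (expr K (gen n)).
Local Notation X := (@EX K (gen n)).
Local Notation C := (@EC K (gen n)).

Definition kd (b : bool) (x : ex) : ex := if b then x else C 0.

(* The brackets listed in the paper (in the given order of arguments). *)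
Definition br0 (g h : gen n) : option ex :=
  match g, h with
  | GE l i j, GE l' k m =>
      if l == l' then Some (esub (kd (j == k) (X (GE l i m))) (kd (i == m) (X (GE l k j))))
      else None
  | GE' l i j, GE' l' k m =>
      if l == l' then Some (esub (kd (j == k) (X (GE' l i m))) (kd (i == m) (X (GE' l k j))))
      else None
  | GE l i j, GQ l' k =>
      if l == l' then Some (kd (j == k) (X (GQ l i))) else None
  | GE' l i j, GP l' k =>
      if l == l' then Some (kd (k == i) (eneg (X (GP l j)))) else None
  | GQ l j, GP l' i =>
      if l' == ordS l then Some (X (GF l i j)) else None
  | GE l i j, GF l' m k =>
      if l == l' then Some (kd (j == k) (X (GF l m i))) else None
  | GE' l i j, GF l' m k =>
      if l == ordS l' then Some (kd (m == i) (eneg (X (GF l' j k)))) else None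
  | _, _ => None
  end.

(* The Lie bracket of basis elements; missing pairs are obtained by       *)
(* antisymmetry, "all other brackets zero".                                *)
Definition br (g h : gen n) : ex :=
  match br0 g h with
  | Some e => e
  | None => match br0 h g with Some e => eneg e | None => C 0 end
  end.

(* Defining relations of U(a_d): xy - yx = [x,y] for basis elements x, y; *)
(* symbols not corresponding to basis elements are set to zero.            *)
Inductive Urel : ex -> ex -> Prop :=
| Urel_br g h : valid_gen d g -> valid_gen d h ->
    Urel (esub (EMul (X g) (X h)) (EMul (X h) (X g))) (br g h)
| Urel_invalid g : ~~ valid_gen d g -> Urel (X g) (C 0).

(* Spanning set of R + gl(V_d)_diag. *)
Inductive Sgen : ex -> Prop :=
| Sgen_R (l : 'I_n) i j : (i < d (ordS l))%N -> (j < d l)%N ->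
    Sgen (EAdd (EAdd
       (esum (d l) (fun m => EMul (X (GE l m j)) (X (GF l i m))))
       (esum (d (ordS l)) (fun m => EMul (X (GF l m j)) (X (GE' (ordS l) i m)))))
       (EMul (C 2%:R^-1) (EAdd (EMul (X (GP (ordS l) i)) (X (GQ l j)))
                               (EMul (X (GQ l j)) (X (GP (ordS l) i))))))
| Sgen_diag (l : 'I_n) i j : (i < d l)%N -> (j < d l)%N ->
    Sgen (EAdd (X (GE l i j)) (X (GE' l i j))).

(* Equality in U(a_d) / U(a_d)(R + gl(V_d)_diag). *)
Definition Yeq (x y : ex) : Prop := meq Urel Sgen x y.

Fixpoint btail (Ex : nat -> nat -> gen n) (l : 'I_n) (s i : nat) : ex :=
  match s with
  | 0 => X (GQ l i)
  | s'.+1 => esum (d l) (fun k => EMul (X (Ex i k)) (btail Ex l s' k))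
  end.

(* b_{l,s} = \sum p_{l,i_1} e_{l,i_1 i_2} ... e_{l,i_s i_{s+1}} q_{l,i_{s+1}} *)
Definition bexpr (l : 'I_n) (s : nat) : ex :=
  esum (d l) (fun i => EMul (X (GP l i)) (btail (fun a b => GE l a b) l s i)).

(* b'_{l,s} = (-1)^s \sum p_{l,i_1} e'_{l,i_1 i_2} ... e'_{l,i_s i_{s+1}} q_{l,i_{s+1}} *)
Definition bexpr' (l : 'I_n) (s : nat) : ex :=
  EMul (C ((-1) ^+ s))
    (esum (d l) (fun i => EMul (X (GP l i)) (btail (fun a b => GE' l a b) l s i))).

(* Coefficient of u^{-s-1} in (u + c)^{-t-1}, expanded in powers of u^{-1}:*)
(* (u+c)^{-t-1} = \sum_{m>=0} binom(-t-1, m) c^m u^{-t-1-m}, so it is      *)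
(* binom(-t-1, s-t) c^{s-t} = (-1)^{s-t} binom(s, t) c^{s-t} if t <= s,   *)
(* and 0 otherwise.                                                        *)
Definition shift_coef (c : K) (t s : nat) : K :=
  if (t <= s)%N then (-1) ^+ (s - t) * ('C(s, t))%:R * c ^+ (s - t) else 0.

(* Coefficient of u^{-s-1} in b_l(u + d_l) = \sum_t b_{l,t} (u+d_l)^{-t-1}; *)
(* only t <= s contribute.                                                 *)
Definition bshift_coef (l : 'I_n) (s : nat) : ex :=
  esum s.+1 (fun t => EMul (C (shift_coef (d l)%:R t s)) (bexpr l t)).

End Ad.

(* Main.v *)
Require Import Defs.
From mathcomp Require Import all_boot all_order all_algebra.
From Stdlib Require Import Setoid Morphisms.
From mathcomp Require Import ring.
Set Implicit Arguments. Unset Strict Implicit. Unset Printing Implicit Defensive.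
Import GRing.Theory.
Local Open Scope ring_scope.

Section Gen.
Variables (K : fieldType) (G : Type) (rel : expr K G -> expr K G -> Prop).
Local Notation ex := (expr K G).
Local Notation "x ~ y" := (aeq rel x y) (at level 70).

Lemma aeq_equiv : Equivalence (aeq rel).
Proof. split; [exact: aeq_refl| exact: aeq_sym| exact: aeq_trans]. Qed.
End Gen.

#[export] Existing Instance aeq_equiv.
#[export] Instance EAdd_proper (K : fieldType) G rel :
  Proper (aeq rel ==> aeq rel ==> aeq rel) (@EAdd K G).
Proof. move=> x x' H y y' H'; exact: aeq_add. Qed.
#[export] Instance EMul_proper (K : fieldType) G rel :
  Proper (aeq rel ==> aeq rel ==> aeq rel) (@EMul K G).
Proof. move=> x x' H y y' H'; exact: aeq_mul. Qed.


#[export] Hint Resolve aeq_refl : core.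
#[export] Instance eneg_proper (K : fieldType) G rel :
  Proper (aeq rel ==> aeq rel) (@eneg K G).
Proof. move=> x x' H; rewrite /eneg H; reflexivity. Qed.
#[export] Instance esub_proper (K : fieldType) G rel :
  Proper (aeq rel ==> aeq rel ==> aeq rel) (@esub K G).
Proof. move=> x x' H y y' H'; rewrite /esub H H'; reflexivity. Qed.
#[export] Instance kd_proper (K : fieldType) n rel :
  Proper (eq ==> aeq rel ==> aeq rel) (@kd K n).
Proof. move=> b b' <- y y' H; case: b => //=; reflexivity. Qed.


Section Gen2.
Context {K : fieldType} {G : Type} {rel : expr K G -> expr K G -> Prop}.
Local Notation ex := (expr K G).
Local Notation "x ~ y" := (aeq rel x y) (at level 70).
Local Notation C := (@EC K G).

Lemma addA (x y z : ex) : EAdd x (EAdd y z) ~ EAdd (EAdd x y) z. Proof. exact: aeq_addA. Qed.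
Lemma addC (x y : ex) : EAdd x y ~ EAdd y x. Proof. exact: aeq_addC. Qed.
Lemma add0 (x : ex) : EAdd (C 0) x ~ x. Proof. exact: aeq_add0. Qed.
Lemma addr0 (x : ex) : EAdd x (C 0) ~ x. Proof. by rewrite addC add0. Qed.
Lemma addN (x : ex) : EAdd x (eneg x) ~ C 0. Proof. exact: aeq_addN. Qed.
Lemma addNl (x : ex) : EAdd (eneg x) x ~ C 0. Proof. by rewrite addC addN. Qed.
Lemma mulA (x y z : ex) : EMul x (EMul y z) ~ EMul (EMul x y) z. Proof. exact: aeq_mulA. Qed.
Lemma mul1 (x : ex) : EMul (C 1) x ~ x. Proof. exact: aeq_mul1l. Qed.
Lemma mulDl (x y z : ex) : EMul (EAdd x y) z ~ EAdd (EMul x z) (EMul y z). Proof. exact: aeq_mulDl. Qed.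
Lemma mulDr (x y z : ex) : EMul x (EAdd y z) ~ EAdd (EMul x y) (EMul x z). Proof. exact: aeq_mulDr. Qed.
Lemma cadd a b : EAdd (C a) (C b) ~ C (a + b). Proof. exact: aeq_cadd. Qed.
Lemma cmul a b : EMul (C a) (C b) ~ C (a * b). Proof. exact: aeq_cmul. Qed.
Lemma ccomm a (x : ex) : EMul (C a) x ~ EMul x (C a). Proof. exact: aeq_ccomm. Qed.

Lemma addCA (x y z : ex) : EAdd x (EAdd y z) ~ EAdd y (EAdd x z).
Proof. by rewrite addA (addC x y) -addA. Qed.
Lemma addACA (x y z w : ex) : EAdd (EAdd x y) (EAdd z w) ~ EAdd (EAdd x z) (EAdd y w).
Proof. by rewrite -!addA (addCA y z). Qed.

Lemma mul0 (x : ex) : EMul (C 0) x ~ C 0.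
Proof.
have H : EMul (C 0) x ~ EAdd (EMul (C 0) x) (EMul (C 0) x).
  by rewrite -mulDl cadd GRing.addr0.
transitivity (EAdd (EMul (C 0) x) (EAdd (EMul (C 0) x) (eneg (EMul (C 0) x)))).
  by rewrite addN addr0.
by rewrite addA -H addN.
Qed.
Lemma mulr0 (x : ex) : EMul x (C 0) ~ C 0.
Proof. by rewrite -ccomm mul0. Qed.
Lemma mulCA a (x y : ex) : EMul x (EMul (C a) y) ~ EMul (C a) (EMul x y).
Proof. by rewrite mulA -ccomm -mulA. Qed.
Lemma mulCC a b (x : ex) : EMul (C a) (EMul (C b) x) ~ EMul (C (a * b)) x.
Proof. by rewrite mulA cmul. Qed.
Lemma mulCD a b (x : ex) : EAdd (EMul (C a) x) (EMul (C b) x) ~ EMul (C (a + b)) x.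
Proof. by rewrite -mulDl cadd. Qed.
Lemma mulCl a (x y : ex) : EMul (EMul (C a) x) y ~ EMul (C a) (EMul x y).
Proof. by rewrite mulA. Qed.
Lemma negD (x y : ex) : eneg (EAdd x y) ~ EAdd (eneg x) (eneg y).
Proof. exact: mulDr. Qed.
Lemma negK (x : ex) : eneg (eneg x) ~ x.
Proof. by rewrite /eneg mulCC mulrNN mulr1 mul1. Qed.
Lemma negC a (x : ex) : eneg (EMul (C a) x) ~ EMul (C (- a)) x.
Proof. by rewrite /eneg mulCC mulN1r. Qed.
Lemma mulNr (x y : ex) : EMul x (eneg y) ~ eneg (EMul x y).
Proof. exact: mulCA. Qed.
Lemma mulNl (x y : ex) : EMul (eneg x) y ~ eneg (EMul x y).
Proof. exact: mulCl. Qed.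
Lemma neg0 : eneg (C 0) ~ C 0.
Proof. exact: mulr0. Qed.
Lemma sub_eq (x y z : ex) : esub x y ~ z -> x ~ EAdd y z.
Proof.
move=> H; rewrite -H /esub addCA addN addr0; reflexivity.
Qed.

Lemma esum0 f : esum 0 f = C 0. Proof. by []. Qed.
Lemma esumS m (f : nat -> ex) : esum m.+1 f = EAdd (f 0%N) (esum m (fun i => f i.+1)).
Proof.
rewrite /esum /= -(addn0 1%N) iotaDl foldr_map; by [].
Qed.
Lemma esum_ext m (f g : nat -> ex) : (forall i, (i < m)%N -> f i ~ g i) -> esum m f ~ esum m g.
Proof.
elim: m f g => [|m IH] f g H; first reflexivity.
rewrite !esumS (H 0%N) // (IH (fun i => f i.+1) (fun i => g i.+1)); first reflexivity.
by move=> i Hi; apply: H.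
Qed.
Lemma esum_pw m (f g : nat -> ex) : (forall i, f i ~ g i) -> esum m f ~ esum m g.
Proof. by move=> H; apply: esum_ext => i _; apply: H. Qed.
Lemma esum_snoc m (f : nat -> ex) : esum m.+1 f ~ EAdd (esum m f) (f m).
Proof.
elim: m f => [|m IH] f; first by rewrite !esumS esum0 addr0 add0.
by rewrite esumS IH esumS addA.
Qed.
Lemma esum_add m (f g : nat -> ex) : esum m (fun i => EAdd (f i) (g i)) ~ EAdd (esum m f) (esum m g).
Proof.
elim: m f g => [|m IH] f g; first by rewrite !esum0 addr0.
by rewrite !esumS IH addACA.
Qed.
Lemma esum_mull m (x : ex) (f : nat -> ex) : EMul x (esum m f) ~ esum m (fun i => EMul x (f i)).
Proof.
elim: m f => [|m IH] f; first by rewrite !esum0 mulr0.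
by rewrite !esumS mulDr IH.
Qed.
Lemma esum_mulr m (x : ex) (f : nat -> ex) : EMul (esum m f) x ~ esum m (fun i => EMul (f i) x).
Proof.
elim: m f => [|m IH] f; first by rewrite !esum0 mul0.
by rewrite !esumS mulDl IH.
Qed.
Lemma esum_neg m (f : nat -> ex) : eneg (esum m f) ~ esum m (fun i => eneg (f i)).
Proof. exact: esum_mull. Qed.
Lemma esum_zero m (f : nat -> ex) : (forall i, (i < m)%N -> f i ~ C 0) -> esum m f ~ C 0.
Proof.
elim: m f => [|m IH] f H; first reflexivity.
rewrite esumS (H 0%N) // (IH (fun i => f i.+1)); first by rewrite add0.
by move=> i Hi; apply: H.
Qed.
Lemma esum_swap m k (f : nat -> nat -> ex) :
  esum m (fun i => esum k (fun j => f i j)) ~ esum k (fun j => esum m (fun i => f i j)).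
Proof.
elim: m f => [|m IH] f.
  by rewrite esum0 esum_zero //; move=> *; reflexivity.
rewrite esumS IH -esum_add.
apply: esum_ext => j _; rewrite esumS; reflexivity.
Qed.
Lemma esum_const m (x : ex) : esum m (fun _ => x) ~ EMul (C m%:R) x.
Proof.
elim: m => [|m IH]; first by rewrite esum0 mul0.
by rewrite esumS IH -{1}(mul1 x) mulCD -natr1 addrC.
Qed.
End Gen2.
#[export] Instance esum_proper (K : fieldType) G rel m :
  Proper (pointwise_relation nat (aeq rel) ==> aeq rel) (@esum K G m).
Proof. move=> f g H; exact: esum_pw. Qed.


Section Gen3.
Context {K : fieldType} {n : nat} {rel : expr K (gen n) -> expr K (gen n) -> Prop}.
Local Notation ex := (expr K (gen n)).
Local Notation "x ~ y" := (aeq rel x y) (at level 70).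
Local Notation C := (@EC K (gen n)).
Lemma kd_mull b (x y : ex) : EMul x (@kd K n b y) ~ @kd K n b (EMul x y).
Proof. case: b => /=; [reflexivity|exact: mulr0]. Qed.
Lemma kd_mulr b (x y : ex) : EMul (@kd K n b y) x ~ @kd K n b (EMul y x).
Proof. case: b => /=; [reflexivity|exact: mul0]. Qed.
Lemma esum_kd m c (f : nat -> ex) : (c < m)%N ->
  esum m (fun j => @kd K n (j == c) (f j)) ~ f c.
Proof.
elim: m => [|m IH] // Hc.
rewrite esum_snoc; rewrite ltnS leq_eqVlt in Hc; case/orP: Hc => [/eqP ->|Hcm].
  rewrite eqxx /= esum_zero; first by rewrite add0.
  by move=> i Hi; rewrite (ltn_eqF Hi).
by rewrite IH // (gtn_eqF Hcm) /= addr0.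
Qed.
Lemma esum_kd' m c (f : nat -> ex) : (c < m)%N ->
  esum m (fun j => @kd K n (c == j) (f j)) ~ f c.
Proof.
move=> Hc; rewrite -(esum_kd f Hc); apply: esum_ext => i _; rewrite eq_sym; reflexivity.
Qed.
End Gen3.

Section Comm.
Context {K : fieldType} {G : Type} {rel : expr K G -> expr K G -> Prop}.
Local Notation ex := (expr K G).
Local Notation "x ~ y" := (aeq rel x y) (at level 70).
Local Notation C := (@EC K G).
Definition commx (x y : ex) := EMul x y ~ EMul y x.
Lemma commx_add x y z : commx x y -> commx x z -> commx x (EAdd y z).
Proof. by rewrite /commx => H1 H2; rewrite mulDr mulDl H1 H2. Qed.
Lemma commx_mul x y z : commx x y -> commx x z -> commx x (EMul y z).
Proof. by rewrite /commx => H1 H2; rewrite mulA H1 -mulA H2 mulA. Qed.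
Lemma commx_C x a : commx x (C a).
Proof. by rewrite /commx ccomm. Qed.
Lemma commx_neg x y : commx x y -> commx x (eneg y).
Proof. by move=> H; apply: commx_mul => //; apply: commx_C. Qed.
Lemma commx_esum x m f : (forall i, (i < m)%N -> commx x (f i)) -> commx x (esum m f).
Proof.
elim: m f => [|m IH] f H; first exact: commx_C.
rewrite esumS; apply: commx_add; first exact: H.
by apply: IH => i Hi; apply: H.
Qed.
Lemma move_r (x y z : ex) : x ~ EAdd y z -> y ~ EAdd x (eneg z).
Proof. by move=> H; rewrite H -addA addN addr0. Qed.
End Comm.
Arguments commx {K G} rel x y.

Section MEq.
Variables (K : fieldType) (G : Type) (rel : expr K G -> expr K G -> Prop) (S : expr K G -> Prop).
Lemma meq_equiv : Equivalence (meq rel S).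
Proof. split; [move=> x; apply: meq_aeq; exact: aeq_refl| exact: meq_sym| exact: meq_trans]. Qed.
End MEq.
#[export] Existing Instance meq_equiv.
#[export] Instance EAdd_mproper (K : fieldType) G rel S :
  Proper (meq rel S ==> meq rel S ==> meq rel S) (@EAdd K G).
Proof. move=> x x' H y y' H'; exact: meq_add. Qed.
#[export] Instance EMul_mproper (K : fieldType) G rel S :
  Proper (aeq rel ==> meq rel S ==> meq rel S) (@EMul K G).
Proof.
move=> x x' H y y' H'; apply: meq_trans (meq_lmul x H') _.
apply: meq_aeq; apply: aeq_mul => //; exact: aeq_refl.
Qed.
#[export] Instance aeq_meq_sub (K : fieldType) G rel S :
  subrelation (aeq rel) (@meq K G rel S).
Proof. move=> x y H; exact: meq_aeq. Qed.

Lemma esum_mext (K : fieldType) G rel S m (f g : nat -> expr K G) :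
  (forall i, (i < m)%N -> meq rel S (f i) (g i)) -> meq rel S (esum m f) (esum m g).
Proof.
elim: m f g => [|m IH] f g H; first reflexivity.
rewrite !esumS; apply: meq_add; first exact: H.
by apply: IH => i Hi; apply: H.
Qed.

Section Spec.
Variables (K : fieldType) (n : nat) (d : 'I_n -> nat) (l : 'I_n).
Local Notation ex := (expr K (gen n)).
Local Notation "x ~ y" := (aeq (Urel d) x y) (at level 70).
Local Notation C := (@EC K (gen n)).
Local Notation X := (@EX K (gen n)).
Local Notation D := (d l).
Local Notation Xe a b := (X (GE l a b)).
Local Notation Xe' a b := (X (GE' l a b)).

Lemma Urel_comm g h : valid_gen d g -> valid_gen d h ->
  EMul (X g) (X h) ~ EAdd (EMul (X h) (X g)) (br K g h).
Proof. move=> Hg Hh; apply: sub_eq; apply: aeq_rel; exact: Urel_br. Qed.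

Lemma br_EQ a b c : br K (GE l a b) (GQ l c) = kd (b == c) (X (GQ l a)).
Proof. by rewrite /br /= eqxx. Qed.
Lemma br_EE a b c x : br K (GE l a b) (GE l c x) =
  esub (kd (b == c) (X (GE l a x))) (kd (a == x) (X (GE l c b))).
Proof. by rewrite /br /= eqxx. Qed.
Lemma br_E'Q a b c : br K (GE' l a b) (GQ l c) = C 0.
Proof. by []. Qed.
Lemma br_E'E a b c x : br K (GE' l a b) (GE l c x) = C 0.
Proof. by []. Qed.

Lemma commx_E'Q i j c : (i < D)%N -> (j < D)%N -> (c < D)%N ->
  commx (Urel d) (Xe' i j) (X (GQ l c)).
Proof.
move=> Hi Hj Hc; rewrite /commx Urel_comm ?br_E'Q ?addr0 //; by rewrite /= ?Hi ?Hj ?Hc.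
Qed.
Lemma commx_E'E i j a b : (i < D)%N -> (j < D)%N -> (a < D)%N -> (b < D)%N ->
  commx (Urel d) (Xe' i j) (Xe a b).
Proof.
move=> Hi Hj Ha Hb; rewrite /commx Urel_comm ?br_E'E ?addr0 //; by rewrite /= ?Hi ?Hj ?Ha ?Hb.
Qed.
Lemma vE a b : (a < D)%N -> (b < D)%N -> valid_gen d (GE l a b).
Proof. by move=> Ha Hb; rewrite /= Ha Hb. Qed.
Lemma vQ a : (a < D)%N -> valid_gen d (GQ l a).
Proof. by []. Qed.

Definition Ev (w : nat -> ex) i := esum D (fun k => EMul (Xe i k) (w k)).
Definition isvec (w : nat -> ex) := forall a b c, (a < D)%N -> (b < D)%N -> (c < D)%N ->
  EMul (Xe a b) (w c) ~ EAdd (EMul (w c) (Xe a b)) (kd (b == c) (w a)).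

Lemma isvec_q : isvec (fun i => X (GQ l i)).
Proof. move=> a b c Ha Hb Hc; by rewrite (Urel_comm (vE Ha Hb) (vQ Hc)) br_EQ. Qed.

Lemma esum_kdb m b (f : nat -> ex) : esum m (fun x => kd b (f x)) ~ kd b (esum m f).
Proof. case: b => /=; first reflexivity. by apply: esum_zero. Qed.

Lemma isvec_Ev w : isvec w -> isvec (Ev w).
Proof.
move=> Hw a b c Ha Hb Hc; rewrite /Ev esum_mull.
transitivity (esum D (fun x => EAdd (EAdd (EMul (EMul (Xe c x) (w x)) (Xe a b))
   (kd (b == x) (EMul (Xe c x) (w a))))
   (EAdd (kd (b == c) (EMul (Xe a x) (w x))) (eneg (kd (a == x) (EMul (Xe c b) (w x))))))).
  apply: esum_ext => x Hx.
  rewrite mulA (Urel_comm (vE Ha Hb) (vE Hc Hx)) br_EE mulDl -mulA (Hw a b x Ha Hb Hx).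
  rewrite /esub mulDl mulNl !kd_mulr mulDr kd_mull mulA.
  reflexivity.
rewrite !esum_add -esum_mulr (esum_kd' _ Hb) esum_kdb -esum_neg (esum_kd' _ Ha).
by rewrite addACA addN addr0.
Qed.
Lemma kd_add b (x y : ex) : kd b (EAdd x y) ~ EAdd (kd b x) (kd b y).
Proof. case: b => /=; [reflexivity| by rewrite add0]. Qed.

Lemma isvec_scal c w : isvec w -> isvec (fun i => EMul (C c) (w i)).
Proof.
move=> Hw a b x Ha Hb Hx; rewrite mulCA Hw // mulDr kd_mull; by rewrite mulCl.
Qed.
Lemma isvec_add w v : isvec w -> isvec v -> isvec (fun i => EAdd (w i) (v i)).
Proof.
move=> Hw Hv a b x Ha Hb Hx; rewrite mulDr Hw // Hv // kd_add mulDl; by rewrite addACA.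
Qed.

Fixpoint W s : nat -> ex := match s with
  | 0 => fun i => X (GQ l i)
  | s'.+1 => fun i => EAdd (EMul (C D%:R) (W s' i)) (eneg (Ev (W s') i)) end.

Lemma isvec_W s : isvec (W s).
Proof.
elim: s => [|s IH] /=; first exact: isvec_q.
apply: isvec_add; first exact: isvec_scal.
exact: (isvec_scal (-1) (isvec_Ev IH)).
Qed.

Lemma vec_right w i : isvec w -> (i < D)%N ->
  esum D (fun j => EMul (w j) (Xe i j)) ~ EAdd (Ev w i) (eneg (EMul (C D%:R) (w i))).
Proof.
move=> Hw Hi.
transitivity (esum D (fun j => EAdd (EMul (Xe i j) (w j)) (eneg (w i)))).
  apply: esum_ext => j Hj; apply: move_r; rewrite (Hw i j j) // eqxx /=; reflexivity.
rewrite esum_add esum_const /eneg !mulCC mulrC; reflexivity.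
Qed.

Lemma commW s i j k : (i < D)%N -> (j < D)%N -> (k < D)%N -> commx (Urel d) (Xe' i j) (W s k).
Proof.
move=> Hi Hj; elim: s k => [|s IH] k Hk /=; first exact: commx_E'Q.
apply: commx_add; first by apply: commx_mul; [apply: commx_C| apply: IH].
apply: commx_neg; apply: commx_esum => x Hx.
apply: commx_mul; [exact: commx_E'E| exact: IH].
Qed.
Lemma diag (z : ex) i j : (i < D)%N -> (j < D)%N ->
  Yeq d (EMul z (Xe' i j)) (eneg (EMul z (Xe i j))).
Proof.
move=> Hi Hj; rewrite /Yeq.
have H : Yeq d (EMul z (EAdd (Xe i j) (Xe' i j))) (EMul z (C 0)).
  by apply: meq_lmul; apply: meq_gen; apply: Sgen_diag.
transitivity (EAdd (eneg (EMul z (Xe i j))) (EMul z (EAdd (Xe i j) (Xe' i j)))).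
  by apply: meq_aeq; rewrite mulDr addA addNl add0.
apply: meq_trans (meq_add (meq_aeq _ (aeq_refl _ _)) H) _.
apply: meq_aeq; by rewrite mulr0 addr0.
Qed.

Definition Z s := @btail K n d (fun a b => GE' l a b) l s.

Lemma mainZ s (y : nat -> ex) :
  Yeq d (esum D (fun i => EMul (y i) (Z s i))) (esum D (fun i => EMul (y i) (W s i))).
Proof.
rewrite /Yeq; elim: s y => [|s IHs] y; first reflexivity.
transitivity (esum D (fun j => EMul (esum D (fun i => EMul (y i) (Xe' i j))) (Z s j))).
  apply: meq_aeq; rewrite /Z /=.
  transitivity (esum D (fun i => esum D (fun j => EMul (EMul (y i) (Xe' i j)) (Z s j)))).
    apply: esum_pw => i; rewrite esum_mull; apply: esum_pw => j; exact: mulA.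
  rewrite esum_swap; apply: esum_pw => j; rewrite esum_mulr; reflexivity.
apply: meq_trans (IHs _) _.
transitivity (esum D (fun i => esum D (fun j => EMul (EMul (y i) (W s j)) (Xe' i j)))).
  apply: meq_aeq.
  transitivity (esum D (fun j => esum D (fun i => EMul (EMul (y i) (Xe' i j)) (W s j)))).
    apply: esum_pw => j; exact: esum_mulr.
  rewrite esum_swap; apply: esum_ext => i Hi; apply: esum_ext => j Hj.
  have := commW s Hi Hj Hj; rewrite /commx => HC.
  by rewrite -mulA HC mulA.
transitivity (esum D (fun i => esum D (fun j => eneg (EMul (EMul (y i) (W s j)) (Xe i j))))).
  apply: esum_mext => i Hi; apply: esum_mext => j Hj; exact: diag.
apply: meq_aeq; apply: esum_ext => i Hi.
transitivity (eneg (EMul (y i) (esum D (fun j => EMul (W s j) (Xe i j))))).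
  rewrite esum_mull esum_neg; apply: esum_pw => j; by rewrite mulA.
rewrite (vec_right (isvec_W s) Hi) -mulNr negD negK addC /=; reflexivity.
Qed.
Definition kap s t : K := (-1) ^+ t * ('C(s, t))%:R * (D%:R) ^+ (s - t).
Definition T t := @btail K n d (fun a b => GE l a b) l t.
Definition LC s i := esum s.+1 (fun t => EMul (C (kap s t)) (T t i)).

Lemma kap0 s : kap s.+1 0 = D%:R * kap s 0.
Proof. by rewrite /kap expr0 !bin0 !subn0 exprS !mul1r. Qed.
Lemma kap_big s : kap s s.+1 = 0.
Proof. by rewrite /kap bin_small // GRing.mulr0 mul0r. Qed.
Lemma kapS s t : kap s.+1 t.+1 = D%:R * kap s t.+1 - kap s t.
Proof.
rewrite /kap subSS binS natrD exprS.
case: (ltnP t s) => Hts.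
  have -> : (s - t = (s - t.+1).+1)%N by rewrite subnS prednK // subn_gt0.
  rewrite exprS; ring.
rewrite (bin_small (n:=s) (m:=t.+1)) ?ltnS //.
have -> : (s - t = 0)%N by apply/eqP; rewrite subn_eq0.
have -> : (s - t.+1 = 0)%N by apply/eqP; rewrite subn_eq0; apply: leqW.
ring.
Qed.

Lemma Ev_pw w v : (forall i, w i ~ v i) -> forall i, Ev w i ~ Ev v i.
Proof. move=> H i; rewrite /Ev; apply: esum_pw => k; by rewrite H. Qed.

Lemma Ev_LC s i : Ev (LC s) i ~ esum s.+1 (fun t => EMul (C (kap s t)) (T t.+1 i)).
Proof.
rewrite /Ev /LC.
transitivity (esum D (fun k => esum s.+1 (fun t => EMul (C (kap s t)) (EMul (Xe i k) (T t k))))).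
  apply: esum_pw => k; rewrite esum_mull; apply: esum_pw => t; exact: mulCA.
rewrite esum_swap; apply: esum_pw => t; rewrite -esum_mull; reflexivity.
Qed.

Lemma WLC s i : W s i ~ LC s i.
Proof.
elim: s i => [|s IH] i.
  rewrite /LC esumS esum0 addr0.
  have -> : kap 0 0 = 1 by rewrite /kap expr0 bin0 !mul1r.
  by rewrite mul1.
rewrite /= IH (Ev_pw IH) Ev_LC /LC esum_mull esum_neg.
transitivity (EAdd (esum s.+2 (fun t => EMul (C (D%:R * kap s t)) (T t i)))
                   (esum s.+1 (fun t => EMul (C (- kap s t)) (T t.+1 i)))).
  apply: EAdd_proper.
    rewrite (@esum_snoc _ _ _ s.+1) kap_big GRing.mulr0 mul0 addr0.
    apply: esum_pw => t; exact: mulCC.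
  apply: esum_pw => t; exact: negC.
rewrite esumS -addA -esum_add (@esumS _ _ s.+1) kap0.
apply: EAdd_proper => //; apply: esum_pw => t; by rewrite mulCD kapS.
Qed.
End Spec.

Theorem lemma3p22 (K : fieldType) (charK0 : [pchar K] =i pred0)
  (n : nat) (n_gt0 : (0 < n)%N) (d : 'I_n -> nat) (l : 'I_n) (s : nat) :
  @Yeq K n d (@bexpr' K n d l s) (@bshift_coef K n d l s).
Proof.
rewrite /Yeq /bexpr'.
have H := mainZ (K:=K) d l s (fun i => EX (GP l i)).
rewrite /Yeq /Z in H.
apply: meq_trans (meq_lmul (EC ((-1) ^+ s)) H) _.
apply: meq_aeq; rewrite /bshift_coef /bexpr.
transitivity (EMul (EC ((-1) ^+ s)) (esum (d l) (fun i => esum s.+1 (fun t =>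
   EMul (EC (kap K d l s t)) (EMul (EX (GP l i)) (T K d l t i)))))).
  apply: EMul_proper => //; apply: esum_pw => i.
  rewrite (WLC K d l s i) /LC esum_mull; apply: esum_pw => t; exact: mulCA.
rewrite esum_swap esum_mull; apply: esum_ext => t Ht.
rewrite -esum_mull mulCC.
have Hts : (t <= s)%N by [].
have -> : (-1) ^+ s * kap K d l s t = shift_coef (d l)%:R t s.
  rewrite /shift_coef Hts /kap -{1}(subnK Hts) exprD.
  rewrite -!mulrA; congr (_ * _); rewrite !mulrA -exprMn mulrNN GRing.mulr1 expr1n mul1r.
  by [].
reflexivity.
Qed.
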